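(* Let $n,m\ge 1$, $I=\{1,\dots,m\}$, and let $f(x)=x^TAx+a^Tx+\alpha$ and $g_i(x)=x^TB_ix+b_i^Tx+\beta_i$ ($i\in I$) be functions on $\mathbb{R}^n$, where $A$ is a real symmetric $n\times n$ matrix, each $B_i$ is a real symmetric positive semidefinite $n\times n$ matrix, $a,b_i\in\mathbb{R}^n$ and $\alpha,\beta_i\in\mathbb{R}$. Suppose there exist $i_0\in I$ and $\lambda\in\mathbb{R}$ such that $B_{i_0}\succ 0$ and (H1) $A+\lambda B_{i_0}\succeq 0$; (H2) there exists a nonzero $v\in\mathbb{R}^n$ with $(A+\lambda B_{i_0})v=0$, $(a+\lambda b_{i_0})^Tv\le 0$, and $B_iv=0$, $b_i^Tv\le 0$ for all $i\in I_0:=I\setminus\{i_0\}$. Then the set $\mathrm{U}(f,g_1,\dots,g_m)$ is convex.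
   Context: $\mathrm{U}(f,g_1,\dots,g_m):=\{(f(x),g_1(x),\dots,g_m(x)) : x\in\mathbb{R}^n\}+\mathbb{R}^{m+1}_+\subset\mathbb{R}^{m+1}$. Condition (H2) is the paper's condition that the recession cone of the convex set $\{x: f(x)+\lambda g_{i_0}(x)\le 0,\ g_i(x)\le 0,\ i\in I_0\}$ is different from $\{0\}$; when this set is nonempty, its recession cone equals $\{v: (A+\lambda B_{i_0})v=0,\ (a+\lambda b_{i_0})^Tv\le0,\ B_iv=0,\ b_i^Tv\le 0,\ i\in I_0\}$. $M\succeq 0$ (resp. $M\succ 0$) means $M$ is positive semidefinite (resp. positive definite). *)

(* Defs.v *)
From HB Require Import structures.
From mathcomp Require Import all_boot all_order all_algebra.
From mathcomp Require Import reals.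
Set Implicit Arguments. Unset Strict Implicit. Unset Printing Implicit Defensive.
Import Order.TTheory GRing.Theory Num.Theory.
Local Open Scope ring_scope.

Definition quadf (R : realType) (n : nat) (M : 'M[R]_n) (c : 'cV[R]_n)
  (gamma : R) (x : 'cV[R]_n) : R :=
  (x^T *m M *m x) 0 0 + (c^T *m x) 0 0 + gamma.

Definition psd (R : realType) (n : nat) (M : 'M[R]_n) : Prop :=
  M^T = M /\ forall x : 'cV[R]_n, 0 <= (x^T *m M *m x) 0 0.
Definition pd (R : realType) (n : nat) (M : 'M[R]_n) : Prop :=
  M^T = M /\ forall x : 'cV[R]_n, x != 0 -> 0 < (x^T *m M *m x) 0 0.

(* the point (f(x), g_1(x), ..., g_m(x)) in R^{m+1}; coordinate 0 is f,
   coordinate lift ord0 i is g_i *)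
Definition fg_point (R : realType) (n m : nat) (f : 'cV[R]_n -> R)
  (g : 'I_m -> 'cV[R]_n -> R) (x : 'cV[R]_n) : 'rV[R]_(m.+1) :=
  \row_(j < m.+1) match unlift ord0 j with
                  | None => f x
                  | Some i => g i x
                  end.

(* U(f,g_1,...,g_m) = {(f(x),g_1(x),...,g_m(x)) : x in R^n} + R^{m+1}_+ *)
Definition Uset (R : realType) (n m : nat) (f : 'cV[R]_n -> R)
  (g : 'I_m -> 'cV[R]_n -> R) (y : 'rV[R]_(m.+1)) : Prop :=
  exists (x : 'cV[R]_n) (d : 'rV[R]_(m.+1)),
    (forall j, 0 <= d 0 j) /\ y = fg_point f g x + d.

Definition convex_set (R : realType) (k : nat) (S : 'rV[R]_k -> Prop) : Prop :=
  forall u v : 'rV[R]_k, S u -> S v -> forall t : R, 0 <= t -> t <= 1 ->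
    S (t *: u + (1 - t) *: v).

(* Main.v *)
Require Import Defs.
From HB Require Import structures.
From mathcomp Require Import all_boot all_order all_algebra.
From mathcomp Require Import reals.

From mathcomp Require Import ring lra.
Import Order.TTheory GRing.Theory Num.Theory.
Local Open Scope ring_scope.

Set Implicit Arguments.
Section S.
Variables (R : realType) (n : nat).
Definition bf (M : 'M[R]_n) (x y : 'cV[R]_n) : R := (x^T *m M *m y) 0 0.
Definition lin (c w : 'cV[R]_n) : R := (c^T *m w) 0 0.

Lemma bfDl M x y z : bf M (x + y) z = bf M x z + bf M y z.
Proof. by rewrite /bf linearD /= !mulmxDl mxE. Qed.
Lemma bfDr M x y z : bf M z (x + y) = bf M z x + bf M z y.
Proof. by rewrite /bf !mulmxDr mxE. Qed.
Lemma bfZl M s x z : bf M (s *: x) z = s * bf M x z.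
Proof. by rewrite /bf linearZ /= -!scalemxAl mxE. Qed.
Lemma bfZr M s x z : bf M z (s *: x) = s * bf M z x.
Proof. by rewrite /bf -!scalemxAr mxE. Qed.
Lemma bfC M x y : M^T = M -> bf M x y = bf M y x.
Proof. move=> hM; rewrite /bf.
have <- : (x^T *m M *m y)^T 0 0 = (x^T *m M *m y) 0 0 by rewrite mxE.
by rewrite !trmx_mul trmxK hM mulmxA.
Qed.
Lemma bfMD M N s x y : bf (M + s *: N) x y = bf M x y + s * bf N x y.
Proof. by rewrite /bf mulmxDr mulmxDl -scalemxAr -scalemxAl !mxE. Qed.
Lemma linD c x y : lin c (x + y) = lin c x + lin c y.
Proof. by rewrite /lin mulmxDr mxE. Qed.
Lemma linZ c s x : lin c (s *: x) = s * lin c x.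
Proof. by rewrite /lin -scalemxAr mxE. Qed.
Lemma linMD c d s x : lin (c + s *: d) x = lin c x + s * lin d x.
Proof. by rewrite /lin linearD /= linearZ /= mulmxDl -scalemxAl !mxE. Qed.

Lemma quad_exp M c g x s w : M^T = M ->
  quadf M c g (x + s *: w) =
  quadf M c g x + s * (2 * bf M x w + lin c w) + s ^+ 2 * bf M w w.
Proof.
move=> hM; rewrite /quadf -/(bf M _ _) -/(bf M x x) -/(lin c _) -/(lin c x).
rewrite bfDl !bfDr !bfZl !bfZr linD linZ (@bfC M x w hM); ring.
Qed.

Lemma quad_conv M c g x1 x2 t : M^T = M ->
  t * quadf M c g x1 + (1 - t) * quadf M c g x2 - quadf M c g (x2 + t *: (x1 - x2))
  = t * (1 - t) * bf M (x1 - x2) (x1 - x2).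
Proof.
move=> hM; have e : x1 = x2 + 1 *: (x1 - x2) by rewrite scale1r addrC subrK.
rewrite {1}e !quad_exp //; ring.
Qed.
End S.
Arguments bf {R n}. Arguments lin {R n}.
Arguments quad_conv {R n M}. Arguments quad_exp {R n M}.


Lemma bf0r (R : realType) n (M : 'M[R]_n) (x v : 'cV[R]_n) : M *m v = 0 -> bf M x v = 0.
Proof. by move=> h; rewrite /bf -mulmxA h mulmx0 mxE. Qed.

Theorem theorem3p1 (R : realType) (n m : nat) (hn : (0 < n)%N) (hm : (0 < m)%N)
  (A : 'M[R]_n) (a : 'cV[R]_n) (alpha : R)
  (B : 'I_m -> 'M[R]_n) (b : 'I_m -> 'cV[R]_n) (beta : 'I_m -> R)
  (hA : A^T = A) (hB : forall i, psd (B i))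
  (i0 : 'I_m) (lambda : R)
  (hBi0 : pd (B i0))
  (H1 : psd (A + lambda *: B i0))
  (H2 : exists v : 'cV[R]_n, v != 0 /\
        (A + lambda *: B i0) *m v = 0 /\
        ((a + lambda *: b i0)^T *m v) 0 0 <= 0 /\
        (forall i, i != i0 -> B i *m v = 0 /\ ((b i)^T *m v) 0 0 <= 0)) :
  convex_set (Uset (quadf A a alpha) (fun i => quadf (B i) (b i) (beta i))).

Proof.
have [v [vnz [hAv [hav hIv]]]] := H2.
have [hBsym hBpd] := hBi0.
pose f := quadf A a alpha. pose g i := quadf (B i) (b i) (beta i).
have main : forall x1 x2 (t : R), 0 <= t -> t <= 1 -> exists z,
    f z <= t * f x1 + (1 - t) * f x2 /\
    forall i, g i z <= t * g i x1 + (1 - t) * g i x2.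
  move=> x1 x2 t t0 t1.
  pose d := x1 - x2; pose x := x2 + t *: d.
  have convg : forall i, g i x <= t * g i x1 + (1 - t) * g i x2.
    move=> i; have := quad_conv (b i) (beta i) x1 x2 t (proj1 (hB i)).
    have := (proj2 (hB i)) d; rewrite -/(bf _ _ _) /g -/d -/x => hp e.
    rewrite -subr_ge0 e; apply: mulr_ge0 => //; apply: mulr_ge0; lra.
  have convh : f x + lambda * g i0 x <=
      t * f x1 + (1 - t) * f x2 + lambda * (t * g i0 x1 + (1 - t) * g i0 x2).
    have e1 := quad_conv a alpha x1 x2 t hA.
    have e2 := quad_conv (b i0) (beta i0) x1 x2 t hBsym.
    have := (proj2 H1) d; rewrite -/(bf _ _ _) bfMD => hp.
    rewrite /f /g -/d -/x in e1 e2 *.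
    have ht : 0 <= t * (1 - t) by apply: mulr_ge0; lra.
    set F1 := quadf A a alpha x1 in e1 *. set F2 := quadf A a alpha x2 in e1 *.
    set F := quadf A a alpha x in e1 *. set G1 := quadf (B i0) (b i0) (beta i0) x1 in e2 *.
    set G2 := quadf (B i0) (b i0) (beta i0) x2 in e2 *.
    set G := quadf (B i0) (b i0) (beta i0) x in e2 *.
    set p := bf (A + lambda *: B i0) d d in hp.
    set q1 := bf A d d in e1 hp. set q2 := bf (B i0) d d in e2 hp.
    nra.
  pose Gt := t * g i0 x1 + (1 - t) * g i0 x2.
  pose P := 2 * bf (B i0) x v + lin (b i0) v.
  pose Q := bf (B i0) v v.
  have Qp : 0 < Q by exact: hBpd.
  have gxG : g i0 x <= Gt := convg i0.
  pose D := P ^+ 2 + 4 * Q * (Gt - g i0 x).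
  have D0 : 0 <= D by rewrite /D; nra.
  pose r := Num.sqrt D.
  have r0 : 0 <= r := sqrtr_ge0 D.
  have r2 : r ^+ 2 = D := sqr_sqrtr D0.
  pose s := (r - P) / (2 * Q).
  have s0 : 0 <= s.
    rewrite /s; apply: divr_ge0; last by nra.
    rewrite subr_ge0; case: (lerP P 0) => hP; first lra.
    rewrite /D in r2; nra.
  exists (x + s *: v).
  have gz : g i0 (x + s *: v) = Gt.
    rewrite /g quad_exp // -/P -/Q -/(g i0 x) /s.
    have hQ : Q != 0 by rewrite gt_eqF.
    rewrite /s; transitivity (g i0 x + (r ^+ 2 - P ^+ 2) / (4 * Q)).
      by field; exact: hQ.
    by rewrite r2 /D; field; exact: hQ.
  split.
    have e1 : f (x + s *: v) = f x + s * (2 * bf A x v + lin a v) + s ^+ 2 * bf A v v.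
      by rewrite /f quad_exp.
    have h1 := bf0r x hAv. have h2 := bf0r v hAv.
    rewrite !bfMD in h1 h2. rewrite -/(lin (a + lambda *: b i0) v) linMD in hav.
    rewrite /g quad_exp // -/P -/Q /P /Q -/(g i0 x) in gz.
    set bAx := bf A x v in e1 h1. set bAv := bf A v v in e1 h2.
    set bBx := bf (B i0) x v in gz h1. set bBv := bf (B i0) v v in gz h2.
    set la := lin a v in e1 hav. set lb := lin (b i0) v in gz hav.
    have hs : s * (la + lambda * lb) <= 0 by nra.
    have eA : bAx = - (lambda * bBx) by lra.
    have eB : bAv = - (lambda * bBv) by lra.
    rewrite e1 eA eB.
    have -> : f x + s * (2 * - (lambda * bBx) + la) + s ^+ 2 * - (lambda * bBv)
      = f x + lambda * g i0 x - lambda * Gt + s * (la + lambda * lb) by rewrite -gz; ring.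
    rewrite -/Gt in convh; lra.
  move=> i; case: (eqVneq i i0) => [->|hi].
    by rewrite gz.
  have [hBv hbv] := hIv i hi.
  have ez : g i (x + s *: v) = g i x + s * lin (b i) v.
    rewrite /g quad_exp; last exact: (proj1 (hB i)).
    rewrite (bf0r x hBv) (bf0r v hBv); ring.
  have hs : s * lin (b i) v <= 0 := mulr_ge0_le0 s0 hbv.
  rewrite ez; have := convg i; lra.
move=> u w [x1 [d1 [hd1 ->]]] [x2 [d2 [hd2 ->]]] t t0 t1.
have [z [hf hg]] := main x1 x2 t t0 t1.
exists z, (t *: (fg_point f g x1 + d1) + (1 - t) *: (fg_point f g x2 + d2) - fg_point f g z).
split; last by rewrite [RHS]addrC subrK.
move=> j; rewrite !mxE; have := hd1 j; have := hd2 j.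
case: unliftP => [i ->|->] h2 h1.
  have := hg i; nra.
nra.
Qed.
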